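(* For every positive integer $m$ and every complex number $\alpha \neq 0$, $$\sum_{k=1}^m H_k\, k^\alpha = \sum_{j=1}^m j!\, S(\alpha, j) \binom{m+1}{j+1} \left(H_{m+1} - \frac{1}{j+1}\right).$$
   Context: For a complex number $\alpha \neq 0$ and a positive integer $k$, the Stirling function of the second kind is $$S(\alpha, k) = \frac{1}{k!} \sum_{j=1}^k (-1)^{k-j} \binom{k}{j} j^\alpha,$$ where for a positive integer $j$, $j^\alpha = e^{\alpha \ln j}$ with $\ln j$ the real logarithm. $H_k = 1 + \frac12 + \cdots + \frac1k$ denotes the $k$-th harmonic number. *)

(* Defs.v *)
From Stdlib Require Import Reals Factorial.
Open Scope R_scope.

(* Complex numbers, represented as (real part, imaginary part). *)
Definition Cx : Type := (R * R)%type.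
Definition Cx0 : Cx := (0, 0).
Definition Cxadd (z w : Cx) : Cx := (fst z + fst w, snd z + snd w).
Definition Cxscale (r : R) (z : Cx) : Cx := (r * fst z, r * snd z).

Fixpoint Cxsum1 (n : nat) (f : nat -> Cx) : Cx :=
  match n with
  | O => Cx0
  | S n' => Cxadd (Cxsum1 n' f) (f (S n'))
  end.

(* For a positive integer j, j^alpha = e^(alpha ln j) with ln j real:
   e^((a+ib) ln j) = e^(a ln j) (cos (b ln j) + i sin (b ln j)). *)
Definition cpow_nat (j : nat) (alpha : Cx) : Cx :=
  let l := ln (INR j) in
  (exp (fst alpha * l) * cos (snd alpha * l),
   exp (fst alpha * l) * sin (snd alpha * l)).

Fixpoint harmonic (k : nat) : R :=
  match k with
  | O => 0
  | S k' => harmonic k' + / INR (S k')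
  end.

Definition stirling2 (alpha : Cx) (k : nat) : Cx :=
  Cxscale (/ INR (Factorial.fact k))
    (Cxsum1 k (fun j => Cxscale ((-1) ^ (k - j) * C k j) (cpow_nat j alpha))).

(* Main.v *)
Require Import Defs.
From Stdlib Require Import Reals Factorial Lra Lia.
Open Scope R_scope.

Lemma C_n_0' n : C n 0 = 1.
Proof. unfold C. rewrite Nat.sub_0_r. simpl. field. apply INR_fact_neq_0. Qed.
Lemma C_n_n' n : C n n = 1.
Proof. unfold C. rewrite Nat.sub_diag. simpl. field. apply INR_fact_neq_0. Qed.

Lemma PL k (b : nat -> R) :
  sum_f_R0 (fun i => C (S k) i * b i) (S k) =
  sum_f_R0 (fun i => C k i * b i) k + sum_f_R0 (fun i => C k i * b (S i)) k.
Proof.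
  destruct k as [|k].
  - simpl. rewrite !C_n_0', C_n_n'. ring.
  - rewrite (decomp_sum _ (S (S k))) by lia. simpl pred.
    rewrite tech5.
    rewrite (sum_eq (fun i => C (S (S k)) (S i) * b (S i))
                    (fun i => C (S k) i * b (S i) + C (S k) (S i) * b (S i))).
    2:{ intros i Hi. rewrite <- pascal by lia. ring. }
    rewrite plus_sum.
    rewrite (decomp_sum (fun i => C (S k) i * b i) (S k)) by lia. simpl pred.
    rewrite (tech5 (fun i => C (S k) i * b (S i)) k).
    rewrite !C_n_0', !C_n_n'. ring.
Qed.

Fixpoint dif (j : nat) (f : nat -> R) : nat -> R :=
  match j with O => f | S j' => fun n => dif j' f (S n) - dif j' f n end.

Lemma newton k : forall f n, f (n + k)%nat = sum_f_R0 (fun j => C k j * dif j f n) k.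
Proof.
  induction k as [|k IH]; intros f n.
  - simpl. rewrite C_n_0', Nat.add_0_r. ring.
  - replace (n + S k)%nat with (S n + k)%nat by lia. rewrite IH.
    rewrite PL. rewrite <- plus_sum. apply sum_eq. intros i _. simpl. ring.
Qed.

Lemma explicit j : forall f n,
  dif j f n = sum_f_R0 (fun i => (-1)^(j-i) * C j i * f (n+i)%nat) j.
Proof.
  induction j as [|j IH]; intros f n.
  - simpl. rewrite C_n_0', Nat.add_0_r. ring.
  - simpl dif. rewrite !IH.
    rewrite (sum_eq (fun i => (-1)^(S j-i) * C (S j) i * f (n+i)%nat)
                    (fun i => C (S j) i * ((-1)^(S j - i) * f (n+i)%nat))).
    2:{ intros; ring. }
    rewrite PL.
    rewrite (sum_eq (fun i => C j i * ((-1)^(S j - i) * f (n+i)%nat))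
                    (fun i => (-1)^(j-i) * C j i * f (n+i)%nat * (-1))).
    2:{ intros i Hi. rewrite Nat.sub_succ_l by lia. simpl pow. ring. }
    rewrite <- scal_sum.
    rewrite (sum_eq (fun i => C j i * ((-1)^(S j - S i) * f (n + S i)%nat))
                    (fun i => (-1)^(j-i) * C j i * f (S n+i)%nat)).
    2:{ intros i Hi. simpl Nat.sub. replace (n + S i)%nat with (S n + i)%nat by lia. ring. }
    ring.
Qed.
Fixpoint s1 (n : nat) (f : nat -> R) : R :=
  match n with O => 0 | S n' => s1 n' f + f (S n') end.

Lemma s1_ext n f g : (forall k, (1 <= k <= n)%nat -> f k = g k) -> s1 n f = s1 n g.
Proof.
  induction n; intros H; simpl; auto.
  rewrite IHn by (intros; apply H; lia). rewrite H by lia. ring.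
Qed.
Lemma s1_plus n f g : s1 n (fun k => f k + g k) = s1 n f + s1 n g.
Proof. induction n; simpl; [ring|rewrite IHn; ring]. Qed.
Lemma s1_scal n c f : s1 n (fun k => c * f k) = c * s1 n f.
Proof. induction n; simpl; [ring|rewrite IHn; ring]. Qed.
Lemma s1_sum n f : s1 n f = sum_f_R0 f n - f 0%nat.
Proof. induction n; simpl; [ring|rewrite IHn; ring]. Qed.

Section Main.
Variable f : nat -> R.
Hypothesis f0 : f 0%nat = 0.
Let D j := s1 j (fun i => (-1)^(j-i) * C j i * f i).

Lemma newton0 k : f k = s1 k (fun j => C k j * D j).
Proof.
  rewrite s1_sum. pose proof (newton k f 0) as H. simpl in H. rewrite H.
  unfold D; simpl s1. rewrite Rmult_0_r, Rminus_0_r.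
  apply sum_eq. intros j _. rewrite explicit, s1_sum. simpl Nat.add.
  rewrite f0. ring.
Qed.

Lemma Cratio n j : (j < n)%nat -> C n (S j) * INR (S j) = C n j * INR (n - j).
Proof.
  intro H. unfold C. replace (n - j)%nat with (S (n - S j)) by lia.
  set (d := (n - S j)%nat). rewrite !fact_simpl, !mult_INR.
  pose proof (INR_fact_neq_0 j). pose proof (INR_fact_neq_0 d).
  pose proof (INR_fact_neq_0 n).
  assert (INR (S j) <> 0) by (apply not_0_INR; lia).
  assert (INR (S d) <> 0) by (apply not_0_INR; lia).
  field. auto.
Qed.

Lemma recur n j : (j < n)%nat ->
  C (S n) (S j) * (harmonic (S n) - / INR (S j)) =
  C n (S j) * (harmonic n - / INR (S j)) + harmonic n * C n j.
Proof.
  intro H. rewrite <- pascal by lia. change (harmonic (S n)) with (harmonic n + / INR (S n)).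
  pose proof (Cratio n j H) as R1.
  rewrite minus_INR in R1 by lia. rewrite S_INR in R1. rewrite !S_INR.
  assert (0 <= INR j) by apply pos_INR. assert (0 <= INR n) by apply pos_INR.
  assert (INR j + 1 <> 0) by lra. assert (INR n + 1 <> 0) by lra.
  replace (C n (S j)) with (C n j * (INR n - INR j) / (INR j + 1)).
  2:{ rewrite <- R1. field. auto. }
  field. split; auto.
Qed.

Lemma s1_S n g : s1 (S n) g = s1 n g + g (S n).
Proof. reflexivity. Qed.

Lemma main_real m :
  s1 m (fun k => harmonic k * f k) =
  s1 m (fun j => C (S m) (S j) * (harmonic (S m) - / INR (S j)) * D j).
Proof.
  induction m as [|m IH]; [reflexivity|].
  rewrite s1_S. rewrite IH. rewrite newton0.
  rewrite (s1_S m (fun j => C (S (S m)) (S j) * (harmonic (S (S m)) - / INR (S j)) * D j)).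
  replace (C (S (S m)) (S (S m)) * (harmonic (S (S m)) - / INR (S (S m))))
    with (harmonic (S m)) by (rewrite C_n_n'; change (harmonic (S (S m))) with (harmonic (S m) + / INR (S (S m))); ring).
  rewrite (s1_ext m (fun j => C (S (S m)) (S j) * (harmonic (S (S m)) - / INR (S j)) * D j)
     (fun j => C (S m) (S j) * (harmonic (S m) - / INR (S j)) * D j +
               harmonic (S m) * (C (S m) j * D j))).
  2:{ intros k Hk. rewrite recur by lia. ring. }
  rewrite s1_plus, s1_scal, s1_S, C_n_n'. ring.
Qed.
End Main.

Lemma fst_sum n F : fst (Cxsum1 n F) = s1 n (fun k => fst (F k)).
Proof. induction n; simpl; auto. rewrite IHn. reflexivity. Qed.
Lemma snd_sum n F : snd (Cxsum1 n F) = s1 n (fun k => snd (F k)).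
Proof. induction n; simpl; auto. rewrite IHn. reflexivity. Qed.

Lemma real_version (g : nat -> R) m :
  s1 m (fun k => harmonic k * g k) =
  s1 m (fun j => C (m + 1) (j + 1) * (harmonic (m + 1) - / INR (j + 1)) *
     (INR (fact j) * (/ INR (fact j) *
        s1 j (fun i => (-1) ^ (j - i) * C j i * g i)))).
Proof.
  set (f := fun k => match k with O => 0 | S _ => g k end).
  rewrite (s1_ext m _ (fun k => harmonic k * f k))
    by (intros k Hk; destruct k; [lia|reflexivity]).
  rewrite (main_real f eq_refl m).
  apply s1_ext. intros j Hj.
  rewrite !Nat.add_1_r.
  rewrite (s1_ext j (fun i => (-1) ^ (j - i) * C j i * g i)
                   (fun i => (-1) ^ (j - i) * C j i * f i))
    by (intros k Hk; destruct k; [lia|reflexivity]).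
  pose proof (INR_fact_neq_0 j). field. split; [auto|apply not_0_INR; lia].
Qed.

Theorem proposition4 (m : nat) (alpha : Cx) :
  (1 <= m)%nat -> alpha <> Cx0 ->
  Cxsum1 m (fun k => Cxscale (harmonic k) (cpow_nat k alpha)) =
  Cxsum1 m (fun j =>
    Cxscale (C (m + 1) (j + 1) * (harmonic (m + 1) - / INR (j + 1)))
      (Cxscale (INR (Factorial.fact j)) (stirling2 alpha j))).
Proof.
  intros _ _.
  apply injective_projections.
  - rewrite !fst_sum.
    transitivity (s1 m (fun k => harmonic k * fst (cpow_nat k alpha))).
    { apply s1_ext; reflexivity. }
    rewrite (real_version (fun k => fst (cpow_nat k alpha)) m).
    apply s1_ext. intros j _. unfold stirling2. cbn [fst Cxscale].
    rewrite fst_sum. reflexivity.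
  - rewrite !snd_sum.
    transitivity (s1 m (fun k => harmonic k * snd (cpow_nat k alpha))).
    { apply s1_ext; reflexivity. }
    rewrite (real_version (fun k => snd (cpow_nat k alpha)) m).
    apply s1_ext. intros j _. unfold stirling2. cbn [snd Cxscale].
    rewrite snd_sum. reflexivity.
Qed.
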